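(* Let $d\ge1$ and $\alpha\in(1/2,1)$. Then there exist two absolutely continuous probability measures $\mu_1,\mu_2$ on $\mathbb R^d$ such that there is no convex set $C\subset\mathbb R^d$ with $\mu_1(C)=\mu_2(C)=\alpha$. *)

(* Defs.v *)
From HB Require Import structures.
From mathcomp Require Import all_boot all_order all_algebra.
From mathcomp Require Import all_classical all_reals all_analysis.
Set Implicit Arguments. Unset Strict Implicit. Unset Printing Implicit Defensive.
Import Order.TTheory GRing.Theory Num.Theory.
Local Open Scope classical_set_scope.
Local Open Scope ring_scope.

(* R^d is modelled as d.-tuple R, carrying the product (= Borel) sigma-algebra
   provided by MathComp-Analysis (measurable_structure.v, measurable_tuple). *)

Definition box (R : realType) (d : nat) (a b : d.-tuple R) : set (d.-tuple R) :=
  [set x | forall i : 'I_d, tnth a i <= tnth x i <= tnth b i].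

Definition box_vol (R : realType) (d : nat) (a b : d.-tuple R) : R :=
  \prod_(i < d) Num.max 0 (tnth b i - tnth a i).

Definition lebesgue_null (R : realType) (d : nat) (N : set (d.-tuple R)) : Prop :=
  forall eps : R, 0 < eps ->
    exists a b : nat -> d.-tuple R,
      N `<=` \bigcup_k box (a k) (b k) /\
      (\sum_(0 <= k <oo) (box_vol (a k) (b k))%:E <= eps%:E)%E.

Definition abs_continuous (R : realType) (d : nat)
    (mu : probability (d.-tuple R) R) : Prop :=
  forall N : set (d.-tuple R), measurable N -> lebesgue_null N -> mu N = 0%E.

Definition convex_tuple_set (R : realType) (d : nat) (C : set (d.-tuple R)) : Prop :=
  forall (x y : d.-tuple R) (t : R), C x -> C y -> 0 <= t <= 1 ->
    C [tuple (1 - t) * tnth x i + t * tnth y i | i < d].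

(* Main.v *)
Require Import Defs.
From HB Require Import structures.
From mathcomp Require Import all_boot all_order all_algebra.
From mathcomp Require Import all_classical all_reals all_analysis.
From mathcomp Require Import measurable_realfun.
From mathcomp Require Import lra ring.
Import Order.TTheory GRing.Theory Num.Theory.
Local Open Scope classical_set_scope.
Local Open Scope ring_scope.
Set Implicit Arguments. Unset Strict Implicit. Unset Printing Implicit Defensive.

Section pfwd.
Local Open Scope ereal_scope.
Context d1 d2 (T1 : measurableType d1) (T2 : measurableType d2) (R : realType).
Variables (P : probability T1 R) (f : T1 -> T2).
Definition pfwd (mf : measurable_fun setT f) (A : set T2) : \bar R := P (f @^-1` A).
Variable mf : measurable_fun setT f.
Let p0 : pfwd mf set0 = 0.
Proof. by rewrite /pfwd preimage_set0 measure0. Qed.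
Let pge0 A : 0 <= pfwd mf A.
Proof. by apply: measure_ge0; rewrite -[X in measurable X]setIT; apply: mf. Qed.
Let psa : semi_sigma_additive (pfwd mf).
Proof. exact: (@measure_semi_sigma_additive _ _ _ (pushforward P f)). Qed.
HB.instance Definition _ := isMeasure.Build _ _ _ (pfwd mf) p0 pge0 psa.
Let pT : pfwd mf setT = 1.
Proof. by rewrite /pfwd preimage_setT probability_setT. Qed.
HB.instance Definition _ := Measure_isProbability.Build _ _ _ (pfwd mf) pT.
End pfwd.
Lemma pfwdE d1 d2 (T1 : measurableType d1) (T2 : measurableType d2) (R : realType)
  (P : probability T1 R) (f : T1 -> T2) (mf : measurable_fun setT f) A :
  pfwd P mf A = P (f @^-1` A).
Proof. by []. Qed.

Section mix.
Local Open Scope ereal_scope.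
Context d (T : measurableType d) (R : realType) (I : finType).
Variables (i0 : I) (P : I -> probability T R).
Definition mix (j : I) (A : set T) : \bar R := ((#|I|%:R)^-1)%:E * \sum_(i : I) P i A.
Local Notation mx := (mix i0).
Let m0 : mx set0 = 0.
Proof. by rewrite /mix big1 ?mule0// => i _; rewrite measure0. Qed.
Let mge0 A : 0 <= mx A.
Proof. by rewrite /mix mule_ge0// ?lee_fin ?invr_ge0// sume_ge0. Qed.
Let msa : semi_sigma_additive mx.
Proof.
move=> F mF tF mUF; rewrite /mix.
rewrite (_ : (fun n => _) = (fun n => ((#|I|%:R)^-1)%:E *
   \sum_(0 <= i < n) \sum_(j : I) P j (F i))); last first.
  by apply/funext => n; rewrite ge0_sume_distrr// => i _; exact: sume_ge0.
apply: cvgeZl => //=.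
rewrite [X in _ --> X](_ : _ =
    lim ((fun n => \sum_(0 <= i < n) \sum_(j : I) P j (F i)) @ \oo)).
  by apply: is_cvg_ereal_nneg_natsum => k _; exact: sume_ge0.
rewrite nneseries_sum//; apply: eq_bigr => /= i _.
exact: measure_semi_bigcup.
Qed.

HB.instance Definition _ := isMeasure.Build _ _ _ mx m0 mge0 msa.
Let mT : mx setT = 1.
Proof.
rewrite /mix (eq_bigr (fun=> 1%:E)) => [|i _]; last exact: probability_setT.
rewrite sumEFin sumr_const -EFinM.
rewrite (@eq_card _ _ I)//.
have : (0 < #|I|)%N by apply/card_gt0P; exists i0.
by rewrite lt0n -(pnatr_eq0 R) => h; rewrite mulVf.
Qed.
HB.instance Definition _ := Measure_isProbability.Build _ _ _ mx mT.
End mix.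

Lemma probE d (T : measurableType d) (R : realType) (P : probability T R) A :
  measurable A -> P A = (fine (P A))%:E.
Proof. by move=> mA; rewrite fineK// fin_num_measure. Qed.

Lemma mixE d (T : measurableType d) (R : realType) (I : finType) (i0 : I)
  (P : I -> probability T R) A : measurable A ->
  mix P i0 A = ((#|I|%:R)^-1 * \sum_(i : I) fine (P i A))%:E.
Proof.
move=> mA; rewrite /mix EFinM -sumEFin; congr (_ * _)%E; apply: eq_bigr => i _.
exact: probE.
Qed.

Section nu.
Variable R : realType.
Lemma mid : measurable_fun [set: measurableTypeR R] (fun x => x : R).
Proof. by move=> _ A mA; rewrite setTI. Qed.
Definition U : probability R R := pfwd (uniform_prob (@ltr01 R)) mid.
Arguments U : simpl never.
Definition consf n (p : R * n.-tuple R) : n.+1.-tuple R := [tuple of p.1 :: p.2].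
Lemma mconsf n : measurable_fun setT (@consf n).
Proof. exact: measurable_cons. Qed.
Fixpoint nu n : probability (n.-tuple R) R :=
  match n with
  | 0 => @dirac _ _ [tuple] R
  | n'.+1 => pfwd (U \x nu n')%E (@mconsf n')
  end.
End nu.

Section boxes.
Variable R : realType.
Local Open Scope ereal_scope.

Lemma measurable_box n (a b : n.-tuple R) : measurable (box a b).
Proof.
rewrite (_ : box a b = \bigcap_(i in [set: 'I_n]) ((fun x : n.-tuple R => tnth x i) @^-1` `[tnth a i, tnth b i]%classic)).
  apply: fin_bigcap_measurable; first exact: finite_finset.
  move=> i _; rewrite -[X in measurable X]setTI; apply: measurable_tnth => //.
apply/seteqP; split => x /=.
  by move=> h i _; rewrite /= in_itv /=; apply: h.
by move=> h i; have := h i I; rewrite /= in_itv.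
Qed.

Lemma U_itv (a b : R) : U R `[a, b]%classic <= (Num.max 0 (b - a))%:E.
Proof.
rewrite /U /pfwd /uniform_prob.
apply: (@le_trans _ _ (\int[lebesgue_measure]_(x in `[a, b]%classic) (cst 1%:E) x)).
  apply: ge0_le_integral => //.
  - exact: measurable_itv.
  - by move=> x _; rewrite lee_fin uniform_pdf_ge0.
  - apply/measurable_EFinP; apply: measurable_funTS; exact: measurable_uniform_pdf.
  - by move=> x _; rewrite lee_fin /uniform_pdf subr0 invr1; case: ifP.
rewrite integral_cst// mul1e.
rewrite [X in X <= _](_ : _ = lebesgue_measure (`[a, b]%classic : set R)); last by [].
rewrite lebesgue_measure_itv/= lte_fin.
case: ifPn => ab; last by rewrite lee_fin le_max lexx.
by rewrite -EFinD lee_fin le_max lexx orbT.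
Qed.

Lemma U01 : U R `[0%R, 1%R]%classic = 1.
Proof. rewrite /U /pfwd /uniform_prob; exact: integral_uniform_pdf1. Qed.

Definition uU (a b : R) : R := fine (U R `[a, b]%classic).

Lemma uU_ge0 a b : (0 <= uU a b)%R.
Proof. by rewrite /uU fine_ge0. Qed.

Lemma uU_le a b : (uU a b <= Num.max 0 (b - a))%R.
Proof. by rewrite /uU -lee_fin -probE// U_itv. Qed.

Lemma uU01 : uU 0 1 = 1%R.
Proof. by rewrite /uU U01. Qed.

Lemma UE a b : U R `[a, b]%classic = (uU a b)%:E.
Proof. exact: probE. Qed.

Lemma nu_box n (a b : n.-tuple R) :
  nu R n (box a b) = (\prod_(i < n) uU (tnth a i) (tnth b i))%:E.
Proof.
elim: n a b => [|n IH] a b.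
  by rewrite /= big_ord0 diracE mem_set// => -[].
have [a0 [a' ->]] : exists a0 (a' : n.-tuple R), a = [tuple of a0 :: a'].
  by exists (thead a), [tuple of behead a]; exact: tuple_eta.
have [b0 [b' ->]] : exists b0 (b' : n.-tuple R), b = [tuple of b0 :: b'].
  by exists (thead b), [tuple of behead b]; exact: tuple_eta.
clear a b; rename a' into a; rename b' into b.
rewrite [LHS]pfwdE.
rewrite (_ : @consf R n @^-1` _ = `[a0, b0]%classic `*` box a b); last first.
  apply/seteqP; split => -[x t] /=.
    move=> h; split.
      by have := h ord0; rewrite !tnth0 /= in_itv.
    by move=> i; have := h (lift ord0 i); rewrite !tnthS.
  rewrite in_itv /= => -[xab h] i; case: (unliftP ord0 i) => [j ->|->].
    by rewrite !tnthS.
  by rewrite !tnth0.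
transitivity ((U R \x nu R n)%E (`[a0, b0]%classic `*` box a b)); first by [].
rewrite product_measure1E//; last exact: measurable_box.
transitivity (U R `[a0, b0]%classic * nu R n (box a b))%E; first by [].
rewrite IH big_ord_recl /= !tnth0.
rewrite UE -EFinM; congr (_ * _)%:E.
by apply: eq_bigr => i _; rewrite !tnthS.
Qed.
End boxes.

Lemma abs_cont_box (R : realType) n (mu : probability (n.-tuple R) R) :
  (forall a b, (mu (box a b) <= (box_vol a b)%:E)%E) -> abs_continuous mu.
Proof.
move=> hb N mN hN; apply/eqP; rewrite eq_le measure_ge0 andbT.
apply/lee_addgt0Pr => e e0; rewrite add0e.
have [a [b [Nab sab]]] := hN e e0.
apply: le_trans (sab).
apply: le_trans; first exact: (measure_sigma_subadditive _ (fun k => measurable_box (a k) (b k)) mN Nab).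
apply: lee_nneseries.
  by move=> k _ _; exact: measure_ge0.
by move=> k _; exact: hb.
Qed.

Lemma mix_le d (T : measurableType d) (R : realType) (I : finType) (i0 : I)
  (P : I -> probability T R) A (v : R) : measurable A ->
  (forall i, (P i A <= v%:E)%E) -> (mix P i0 A <= v%:E)%E.
Proof.
move=> mA h; rewrite mixE// lee_fin.
have I0 : (0 < #|I|)%N by apply/card_gt0P; exists i0.
have v0 : 0 <= v by rewrite -lee_fin (le_trans _ (h i0)).
have hs : \sum_(i : I) fine (P i A) <= #|I|%:R * v.
  rewrite mulr_natl; apply: (@le_trans _ _ (\sum_(i : I) v)).
    by apply: ler_sum => i _; rewrite -lee_fin -probE.
  by rewrite sumr_const (@eq_card _ _ I).
apply: le_trans (ler_wpM2l _ hs) _; first by rewrite invr_ge0.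
by rewrite mulKf// pnatr_eq0 -lt0n.
Qed.

Lemma nu_abs (R : realType) n : abs_continuous (nu R n).
Proof.
apply: abs_cont_box => a b; rewrite nu_box lee_fin /box_vol.
apply: ler_prod => i _; rewrite uU_ge0 /=; exact: uU_le.
Qed.

Section psi.
Variables (R : realType) (d : nat).
Definition psi (b : bool) (c : 'I_d -> R) (x : d.-tuple R) : d.-tuple R :=
  [tuple (if b then tnth x i else - tnth x i) + c i | i < d].

Lemma mpsi b c : measurable_fun setT (psi b c).
Proof.
apply/measurable_fun_tnthP => i.
rewrite (_ : _ \o _ = fun x => (if b then tnth x i else - tnth x i) + c i); last first.
  by apply/funext => x /=; rewrite tnth_mktuple.
apply: measurable_funD => //; case: b.
  exact: measurable_tnth.
by apply: measurable_funN; exact: measurable_tnth.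
Qed.

Lemma psi_box b c (a e : d.-tuple R) : exists a2 e2,
  psi b c @^-1` box a e = box a2 e2 /\ box_vol a2 e2 = box_vol a e.
Proof.
case: b.
  exists [tuple tnth a i - c i | i < d], [tuple tnth e i - c i | i < d]; split.
    apply/seteqP; split => x /= h i; move: (h i); rewrite !tnth_mktuple;
      by move=> /andP[h1 h2]; apply/andP; split; lra.
  by rewrite /box_vol; apply: eq_bigr => i _; rewrite !tnth_mktuple; congr (Num.max _ _); lra.
exists [tuple c i - tnth e i | i < d], [tuple c i - tnth a i | i < d]; split.
  apply/seteqP; split => x /= h i; move: (h i); rewrite !tnth_mktuple;
    by move=> /andP[h1 h2]; apply/andP; split; lra.
by rewrite /box_vol; apply: eq_bigr => i _; rewrite !tnth_mktuple; congr (Num.max _ _); lra.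
Qed.
End psi.

Section geom.
Variables (R : realType) (d : nat).
Implicit Types (C : set (d.-tuple R)) (x s : d.-tuple R).

Definition upd x (j : 'I_d) (v : R) : d.-tuple R :=
  [tuple if i == j then v else tnth x i | i < d].

Definition zero : d.-tuple R := [tuple 0 | i < d].
Definition one : d.-tuple R := [tuple 1 | i < d].

Lemma cube_sub C : convex_tuple_set C ->
  (forall x, (forall i, tnth x i = 0 \/ tnth x i = 1) -> C x) ->
  box zero one `<=` C.
Proof.
move=> cC hc.
suff H : forall j x, (forall i, 0 <= tnth x i <= 1) ->
    (forall i : 'I_d, (j <= i)%N -> tnth x i = 0 \/ tnth x i = 1) -> C x.
  move=> x hx; apply: (H d) => [i|i]; last by rewrite leqNgt ltn_ord.
  by have := hx i; rewrite /zero /one !tnth_mktuple.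
elim=> [|j IH] x hx hj.
  by apply: hc => i; apply: hj.
have [jd|jd] := ltnP j d; last first.
  by apply: IH => // i ji; exfalso; move: (ltn_ord i); rewrite ltnNge (leq_trans jd ji).
pose jj := Ordinal jd.
have h0 : C (upd x jj 0).
  apply: IH.
    move=> i; rewrite /upd tnth_mktuple; case: eqP => _; [by rewrite lexx ler01 | exact: hx].
  move=> i ji; rewrite /upd tnth_mktuple; case: eqP => [_|ne]; first by left.
  apply: hj; rewrite ltn_neqAle ji andbT; apply/eqP => ij; apply: ne; apply: val_inj.
  by rewrite /= -ij.
have h1 : C (upd x jj 1).
  apply: IH.
    move=> i; rewrite /upd tnth_mktuple; case: eqP => _; [by rewrite lexx ler01 | exact: hx].
  move=> i ji; rewrite /upd tnth_mktuple; case: eqP => [_|ne]; first by right.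
  apply: hj; rewrite ltn_neqAle ji andbT; apply/eqP => ij; apply: ne; apply: val_inj.
  by rewrite /= -ij.
have := cC _ _ (tnth x jj) h0 h1 (hx jj).
congr C; apply: eq_from_tnth => i; rewrite !tnth_mktuple.
by case: eqP => [->|_]; rewrite ?mulr0 ?mulr1 ?add0r // -mulrDl subrK mul1r.
Qed.

Definition refl s x : d.-tuple R := [tuple 2 * tnth s i - tnth x i | i < d].

Lemma refl_out C s x : convex_tuple_set C -> ~ C s -> C x -> ~ C (refl s x).
Proof.
move=> cC ns Cx Cr; apply: ns.
have := cC _ _ (1 / 2) Cx Cr; rewrite divr_ge0 ?ler01// ler_pdivrMr ?mul1r ?ltr0n// ler1n.
move=> /(_ isT); congr C; apply: eq_from_tnth => i; rewrite !tnth_mktuple.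
field.
all: by [].
Qed.
End geom.

Section main.
Variables (R : realType) (d m : nat).
Local Notation K := {ffun 'I_d -> 'I_m.+1}.
Definition g (k : K) : 'I_d -> R := fun i => 2 * (k i)%:R - m%:R.

Definition revk (k : K) : K := [ffun i => rev_ord (k i)].
Lemma revk_inj : injective revk.
Proof.
apply: (can_inj (g := revk)) => k; apply/ffunP => i; rewrite !ffunE; exact: rev_ordK.
Qed.

Definition Tk (s : d.-tuple R) (k : K) : K :=
  [ffun i => if tnth s i == 1 then ordS (k i) else k i].
Lemma Tk_inj s : injective (Tk s).
Proof.
move=> k1 k2 /ffunP h; apply/ffunP => i; have := h i; rewrite !ffunE.
by case: ifP => _ //; exact: ordS_inj.
Qed.

Definition good : pred K := [pred k | k \in ffun_on (predC1 ord_max)].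

Lemma card_good : #|good| = (m ^ d)%N.
Proof.
rewrite (eq_card (B := ffun_on (predC1 (@ord_max m)))) //.
by rewrite card_ffun_on cardC1 !card_ord.
Qed.

Lemma shift_sum (F : ('I_d -> R) -> R) (s : d.-tuple R) :
  (forall i, tnth s i = 0 \/ tnth s i = 1) ->
  (forall c, 0 <= F c <= 1) ->
  \sum_(k : K) F (g k) - (#|K|%:R - (m ^ d)%:R) <=
  \sum_(k : K) F (fun i => 2 * tnth s i - g k i).
Proof.
move=> hs F01.
have E1 : \sum_(k : K) F (fun i => 2 * tnth s i - g k i) =
          \sum_(k : K) F (fun i => g k i + 2 * tnth s i).
  rewrite (reindex_inj revk_inj); apply: eq_bigr => k _; congr F.
  apply/funext => i; rewrite /g /revk ffunE /= subSS natrB; last by rewrite -ltnS.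
  ring.
have E2 : \sum_(k : K) F (g k) = \sum_(k : K) F (g (Tk s k)).
  by rewrite (reindex_inj (@Tk_inj s)).
rewrite E1 E2 (bigID good) /=.
have Hg : forall k, good k -> g (Tk s k) = (fun i => g k i + 2 * tnth s i).
  move=> k /ffun_onP gk; apply/funext => i; rewrite /g /Tk ffunE.
  have := gk i; rewrite !inE => ki.
  case: (hs i) => ->.
    by rewrite (_ : ((0:R) == 1) = false) ?mulr0 ?addr0 // eq_sym oner_eq0.
  rewrite eqxx /= modn_small; last by rewrite ltnS ltn_neqAle ki -ltnS ltn_ord.
  by rewrite -addn1 natrD; ring.
rewrite (eq_bigr (fun k => F (fun i => g k i + 2 * tnth s i)) (fun k gk => congr1 F (Hg k gk))).
have Hb : \sum_(k | ~~ good k) F (g (Tk s k)) <= #|K|%:R - (m ^ d)%:R.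
  apply: le_trans (_ : \sum_(k | ~~ good k) (1 : R) <= _).
    by apply: ler_sum => k _; case/andP: (F01 (g (Tk s k))).
  rewrite sumr_const -card_good.
  have := cardC good; rewrite -addnC => <-.
  by rewrite natrD addrK.
have Hp : \sum_(k | good k) F (fun i => g k i + 2 * tnth s i) <=
          \sum_(k : K) F (fun i => g k i + 2 * tnth s i).
  rewrite [X in _ <= X](bigID good) /= lerDl.
  by apply: sumr_ge0 => k _; case/andP: (F01 (fun i => g k i + 2 * tnth s i)).
lra.
Qed.
End main.

Lemma bern (R : realType) (x : R) n : 0 <= x <= 1 -> 1 - n%:R * x <= (1 - x) ^+ n.
Proof.
move=> /andP[x0 x1]; elim: n => [|n IH]; first by rewrite mul0r subr0 expr0.
rewrite exprS.
have h1 : 0 <= 1 - x by lra.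
have h2 := ler_wpM2l h1 IH.
have h3 : 0 <= n%:R * x * x by rewrite mulr_ge0 // mulr_ge0.
have e : (1 - x) * (1 - n%:R * x) = 1 - (n%:R + 1) * x + n%:R * x * x by ring.
by rewrite -natr1; apply: le_trans h2; rewrite e lerDl.
Qed.

Lemma choose_m (R : realType) (a : R) d : 1 / 2 < a ->
  exists m : nat, (2 - 2 * a) * (m.+1%:R ^+ d) < m%:R ^+ d.
Proof.
move=> ha; set e := 2 * a - 1.
have e0 : 0 < e by rewrite /e subr_gt0; move: ha; rewrite ltr_pdivrMr ?ltr0n // mulrC.
exists (Num.truncn (d%:R / e)); set m := Num.truncn _.
have hm : d%:R / e < m.+1%:R by exact: truncnS_gt.
set y := m.+1%:R; have y0 : 0 < y by rewrite ltr0n.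
have hx : 0 <= y^-1 <= 1.
  rewrite invr_ge0 ltW //= invr_le1 // ?unitfE ?gt_eqF //.
  by rewrite /y ler1n.
have hb := bern d hx.
have hmy : m%:R = y * (1 - y^-1) by rewrite mulrBr mulr1 mulfV ?gt_eqF// /y -natr1 addrK.
rewrite hmy exprMn.
have yd0 : 0 < y ^+ d by rewrite exprn_gt0.
have hdx : d%:R * y^-1 < e.
  by rewrite -(ltr_pM2r y0) -mulrA mulVf ?gt_eqF // mulr1 -ltr_pdivrMl // mulrC.
apply: lt_le_trans (_ : y ^+ d * (1 - d%:R * y^-1) <= _); last first.
  by rewrite ler_wpM2l // ltW.
rewrite mulrC ltr_pM2l //; rewrite /e in hdx; move: (d%:R / y) hdx => q hq; lra.
Qed.

Section mu2.
Variables (R : realType) (d m : nat).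
Local Notation K := {ffun 'I_d -> 'I_m.+1}.

Definition Q (c : 'I_d -> R) : probability (d.-tuple R) R :=
  mix (fun b : bool => pfwd (nu R d) (mpsi b c)) true.

Definition mu2 : probability (d.-tuple R) R :=
  mix (fun k : K => Q (@g R d m k)) [ffun _ => ord0].

Lemma nu_box_le (a e : d.-tuple R) : (nu R d (box a e) <= (box_vol a e)%:E)%E.
Proof.
rewrite nu_box lee_fin /box_vol.
apply: ler_prod => i _; rewrite uU_ge0 /=; exact: uU_le.
Qed.

Lemma mu2_abs : abs_continuous mu2.
Proof.
apply: abs_cont_box => a e.
apply: mix_le; first exact: measurable_box.
move=> k; apply: mix_le; first exact: measurable_box.
move=> b /=; rewrite pfwdE.
have [a2 [e2 [-> <-]]] := psi_box b (@g R d m k) a e.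
exact: nu_box_le.
Qed.

Lemma QD (c s2 : 'I_d -> R) C :
  Q c (psi false s2 @^-1` C) = Q (fun i => s2 i - c i) C.
Proof.
rewrite /Q /mix /=; congr (_ * _)%E.
have E b : psi b c @^-1` (psi false s2 @^-1` C) =
           psi (~~ b) (fun i => s2 i - c i) @^-1` C.
  congr (_ @^-1` C); apply/funext => x; apply: eq_from_tnth => i.
  by rewrite !tnth_mktuple; case: b => /=; ring.
rewrite [RHS](reindex_inj negb_inj) /=.
by apply: eq_bigr => b _; rewrite !pfwdE E.
Qed.
End mu2.

Lemma prob01 d (T : measurableType d) (R : realType) (P : probability T R) A :
  measurable A -> 0 <= fine (P A) <= 1.
Proof.
move=> mA; rewrite -!lee_fin -probE// measure_ge0 /=; exact: probability_le1.
Qed.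

Unset Implicit Arguments.
Set Strict Implicit.

Theorem mainTheorem7 (R : realType) (d : nat) (alpha : R) :
  (0 < d)%N -> 1 / 2 < alpha -> alpha < 1 ->
  exists mu1 mu2 : probability (d.-tuple R) R,
    abs_continuous mu1 /\ abs_continuous mu2 /\
    ~ (exists C : set (d.-tuple R),
         measurable C /\ convex_tuple_set C /\
         mu1 C = alpha%:E /\ mu2 C = alpha%:E).
Proof.
move=> _ ha1 ha2.
have [m hm] := choose_m d ha1.
exists (nu R d), (mu2 R d m); split; first exact: nu_abs.
split; first exact: mu2_abs.
move=> [C [mC [cC [h1 h2]]]].
have [s [hs ns]] : exists s : d.-tuple R,
    (forall i, tnth s i = 0 \/ tnth s i = 1) /\ ~ C s.
  apply: contrapT => hn.
  have sub : box (zero R d) (one R d) `<=` C.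
    apply: cube_sub => // x hx; apply: contrapT => nx; apply: hn; by exists x.
  have : (nu R d (box (zero R d) (one R d)) <= nu R d C)%E.
    by apply: le_measure; rewrite ?inE//; exact: measurable_box.
  rewrite h1 nu_box big1 => [|i _]; last by rewrite !tnth_mktuple uU01.
  rewrite lee_fin => h; lra.
set s2 := fun i => 2 * tnth s i.
set D := psi false s2 @^-1` C.
have mD : measurable D.
  by rewrite /D -[X in measurable X]setTI; apply: mpsi.
have dCD : C `&` D = set0.
  apply/seteqP; split => // x [Cx Dx]; apply: (refl_out cC ns Cx).
  have -> : refl s x = psi false s2 x.
    by apply: eq_from_tnth => i; rewrite !tnth_mktuple /s2 addrC.
  exact: Dx.
have hU : (mu2 R d m C + mu2 R d m D <= 1)%E.
  rewrite -measureU //; apply: probability_le1; exact: measurableU.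
pose H := fun c : 'I_d -> R => fine (@Q R d c C).
have H01 c : 0 <= H c <= 1 by exact: prob01.
have eC : mu2 R d m C = (#|{ffun 'I_d -> 'I_m.+1}|%:R^-1 *
     \sum_(k : {ffun 'I_d -> 'I_m.+1}) H (@g R d m k))%:E.
  transitivity (mix (fun k : {ffun 'I_d -> 'I_m.+1} => @Q R d (@g R d m k)) [ffun _ => ord0] C); first by [].
  by rewrite mixE.
have eD : mu2 R d m D = (#|{ffun 'I_d -> 'I_m.+1}|%:R^-1 *
     \sum_(k : {ffun 'I_d -> 'I_m.+1}) H (fun i => 2 * tnth s i - @g R d m k i))%:E.
  transitivity (mix (fun k : {ffun 'I_d -> 'I_m.+1} => @Q R d (@g R d m k)) [ffun _ => ord0] D); first by [].
  rewrite mixE//; congr (_ * _)%:E; apply: eq_bigr => k _.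
  by rewrite /D QD.
have hs' := @shift_sum R d m H s hs H01.
have cK : #|{ffun 'I_d -> 'I_m.+1}| = (m.+1 ^ d)%N by rewrite card_ffun !card_ord.
move: hU h2 hs'; rewrite eC eD cK -EFinD lee_fin => hU [h2e] hs'.
rewrite !natrX in hU h2e hs'.
move: hU h2e hs'.
set S := \sum_(k : {ffun 'I_d -> 'I_m.+1}) H (@g R d m k).
set S' := \sum_(k : {ffun 'I_d -> 'I_m.+1}) H _.
set M := m.+1%:R ^+ d.
set G := m%:R ^+ d.
move=> hU h2e hs'.
have M0 : 0 < M by rewrite exprn_gt0 // ltr0n.
have eS : S = alpha * M by rewrite -h2e mulrC mulrA mulfV ?gt_eqF // mul1r.
have hS' : S' <= (1 - alpha) * M.
  have : M^-1 * S' <= 1 - alpha by lra.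
  by rewrite ler_pdivrMl // mulrC.
have hm' : (2 - 2 * alpha) * M < G by [].
rewrite eS in hs'.
have e1 : (2 - 2 * alpha) * M = 2 * M - 2 * (alpha * M) by ring.
have e2 : (1 - alpha) * M = M - alpha * M by ring.
rewrite e1 in hm'; rewrite e2 in hS'.
lra.
Qed.
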